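(* Every nondeterministic constraint logic (NCL) instance that has at least one solution has more than one solution.
   Context: An NCL instance is a 3-regular undirected graph whose edges are colored blue or red, with each vertex incident to either exactly one or exactly three blue edges. A solution is an orientation of its edges such that every vertex has at least one incoming blue edge or at least two incoming red edges. *)

(* Defs.v *)
From mathcomp Require Import all_boot.
Set Implicit Arguments. Unset Strict Implicit. Unset Printing Implicit Defensive.

Definition simple_graph (V : finType) (adj : rel V) : Prop :=
  irreflexive adj /\ symmetric adj.

Definition cubic (V : finType) (adj : rel V) : Prop :=
  forall v : V, #|[set w | adj v w]| = 3.

Definition NCL_instance (V : finType) (adj : rel V) (blue : rel V) : Prop :=
  [/\ simple_graph adj, cubic adj,
      (forall u v, adj u v -> blue u v = blue v u) &
      forall v : V, #|[set w | adj v w && blue v w]| \in [:: 1; 3]].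

(* An orientation of the edges: [o u v] means the edge {u,v} is directed
   from u to v.  Only edges may be oriented, and every edge gets exactly one
   direction. *)
Definition orientation (V : finType) (adj : rel V) (o : rel V) : Prop :=
  (forall u v, o u v -> adj u v) /\
  (forall u v, adj u v -> o u v != o v u).

Definition NCL_solution (V : finType) (adj blue : rel V) (o : rel V) : Prop :=
  orientation adj o /\
  forall v : V,
    (exists u, [&& adj u v, blue u v & o u v]) \/
    2 <= #|[set u | [&& adj u v, ~~ blue u v & o u v]]|.

(* Main.v *)
Require Import Defs.
From mathcomp Require Import all_boot.
From mathcomp Require Import zify.
From Stdlib Require Import Classical.
Set Implicit Arguments. Unset Strict Implicit.

Lemma sc (V : finType) (P : pred V) c : \sum_(u | P u) c = #|[set u | P u]| * c.
Proof. by rewrite sum_nat_const cardsE. Qed.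

Lemma split_card (V : finType) (P : pred V) (b : pred V): \sum_(u | P u) (b u).+1 = 2 * #|[set u | P u && b u]| + #|[set u | P u && ~~ b u]|.
Proof. rewrite (bigID b) /=. rewrite (eq_bigr (fun _ => 2)); last by move=> i /andP[_ ->].
rewrite [X in _ + X](eq_bigr (fun _ => 1)); last by move=> i /andP[_ /negbTE ->].
rewrite !sc; lia. Qed.

Lemma split_card1 (V : finType) (P : pred V) (b : pred V): #|[set u | P u]| = #|[set u | P u && b u]| + #|[set u | P u && ~~ b u]|.
Proof. have := sc P 1; rewrite (bigID b) /= !sc; lia. Qed.

Definition inw (V : finType) (adj blue o : rel V) v := \sum_(u | adj u v && o u v) (blue u v).+1.

Lemma inw_split (V : finType) (adj blue o : rel V) v : inw adj blue o v =
  2 * #|[set u | [&& adj u v, blue u v & o u v]]| + #|[set u | [&& adj u v, ~~ blue u v & o u v]]|.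
Proof.
rewrite /inw (split_card (fun u => adj u v && o u v) (fun u => blue u v)).
congr (2 * _ + _); apply: eq_card => u; rewrite !inE;
 by case: (adj u v); case: (blue u v); case: (o u v).
Qed.

Lemma sol_iff (V : finType) (adj blue o : rel V) : orientation adj o ->
  (NCL_solution adj blue o <-> forall v, 2 <= inw adj blue o v).
Proof.
move=> Ho; split.
- case=> _ H v; rewrite inw_split; case: (H v) => [[u Hu]|H2]; last by lia.
  have : 0 < #|[set u | [&& adj u v, blue u v & o u v]]|.
    by apply/card_gt0P; exists u; rewrite inE.
  lia.
- move=> H; split => // v; have := H v; rewrite inw_split.
  case: (posnP #|[set u | [&& adj u v, blue u v & o u v]]|) => HB.
  + rewrite HB => ?; right; lia.
  + move=> _; left; move/card_gt0P: HB => [u]; rewrite inE => Hu; by exists u.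
Qed.

Theorem mainTheorem18 (V : finType) (adj blue : rel V) :
  0 < #|V| ->
  NCL_instance adj blue ->
  (exists o, NCL_solution adj blue o) ->
  exists o1 o2, [/\ NCL_solution adj blue o1, NCL_solution adj blue o2 &
                    exists u v, o1 u v != o2 u v].
Proof.
move=> Hn [[Hirr Hsym] Hcub Hbs Hbc] [o Hso].
have Ho := Hso.1.
have Hin := (proj1 (sol_iff blue Ho) Hso).
case: (classic (exists u v, [/\ adj u v, o u v & 2 + (blue u v).+1 <= inw adj blue o v])).
- case=> u0 [v0 [Ha Hou Hi]].
  have Hne : u0 != v0 by apply/eqP => E; move: Ha; rewrite E Hirr.
  pose o2 x y := if (x == u0) && (y == v0) then false
                 else if (x == v0) && (y == u0) then true else o x y.
  have Ho2 : orientation adj o2.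
    split.
    + move=> x y; rewrite /o2; case: ifP => //; case: ifP.
      * by case/andP => /eqP -> /eqP -> _ _; rewrite Hsym.
      * by move=> _ _; apply: Ho.1.
    + move=> x y Hxy; rewrite /o2.
      have [Ex|Nx] := eqVneq x u0; have [Ey|Ny] := eqVneq y v0;
      have [Ex'|Nx'] := eqVneq x v0; have [Ey'|Ny'] := eqVneq y u0;
      rewrite /= ?eqxx ?andbT ?andbF //=; subst;
      rewrite ?eqxx ?(negbTE Hne) ?(negbTE Nx) ?(negbTE Ny) ?(negbTE Nx') ?(negbTE Ny') ?andbF ?andbT //=;
      try (by move: Hne; rewrite eqxx);
      try (by rewrite eq_sym (negbTE Hne));
      try (by move: Hxy; rewrite Hirr); try (by apply: Ho.2).
  exists o, o2; split => //; last first.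
    by exists u0, v0; rewrite /o2 !eqxx /= Hou.
  apply/(sol_iff blue Ho2) => x.
  have [->|Nx] := eqVneq x v0.
  + have E1 : inw adj blue o v0 = (blue u0 v0).+1 + \sum_(u | u != u0) (if adj u v0 && o u v0 then (blue u v0).+1 else 0).
      by rewrite /inw big_mkcond (bigD1 u0) //= Ha Hou.
    have E2 : inw adj blue o2 v0 = \sum_(u | u != u0) (if adj u v0 && o u v0 then (blue u v0).+1 else 0).
      rewrite /inw big_mkcond (bigD1 u0) //= /o2 !eqxx /= andbF add0n.
      apply: eq_bigr => i Hi0; rewrite (negbTE Hi0) /=.
      by rewrite [v0 == u0]eq_sym (negbTE Hne) andbF.
    move: Hi; rewrite E1 E2; lia.
  + apply: (leq_trans (Hin x)); rewrite /inw !(big_mkcond (fun u => adj u x && _)).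
    apply: leq_sum => i _; rewrite /o2 (negbTE Nx) andbF.
    case: ifP => //; case/andP => -> ->; by case: ((i == v0) && (x == u0)).
- move=> Hnot.
  have crit u v : adj u v -> o u v -> inw adj blue o v < 2 + (blue u v).+1.
    move=> Ha Hou; rewrite ltnNge; apply/negP => H; apply: Hnot; by exists u, v.
  have le2 v : inw adj blue o v <= 2.
    rewrite leqNgt; apply/negP => H3.
    have := H3; rewrite inw_split => H3'.
    case: (posnP #|[set u | [&& adj u v, ~~ blue u v & o u v]]|) => HR.
    + have : 0 < #|[set u | [&& adj u v, blue u v & o u v]]| by lia.
      move/card_gt0P => [u]; rewrite inE => /and3P[Ha Hb Hou].
      have := crit u v Ha Hou; rewrite Hb inw_split; lia.
    + move/card_gt0P: HR => [u]; rewrite inE => /and3P[Ha Hb Hou].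
      have := crit u v Ha Hou; rewrite (negbTE Hb); lia.
  pose o2 x y := o y x.
  have Ho2 : orientation adj o2.
    split; first by move=> x y /Ho.1; rewrite Hsym.
    move=> x y Hxy; rewrite /o2 eq_sym; exact: Ho.2.
  have Hrev v : inw adj blue o v + inw adj blue o2 v = \sum_(u | adj u v) (blue u v).+1.
    rewrite [RHS](bigID (fun u => o u v)) /=; congr (_ + _); apply: eq_bigl => u.
    rewrite /o2; case Ha: (adj u v) => //=.
    have := Ho.2 _ _ Ha; by case: (o u v); case: (o v u).
  have Htot v : 4 <= \sum_(u | adj u v) (blue u v).+1.
    rewrite (split_card (fun u => adj u v) (fun u => blue u v)).
    have := split_card1 (fun u => adj u v) (fun u => blue u v).
    have -> : #|[set u | adj u v]| = 3.
      rewrite -(Hcub v); apply: eq_card => u; by rewrite !inE Hsym.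
    have : #|[set u | adj u v && blue u v]| \in [:: 1; 3].
      have -> : [set u | adj u v && blue u v] = [set w | adj v w && blue v w].
        apply/setP => u; rewrite !inE Hsym.
        case Ha: (adj v u) => //=; apply: Hbs; by rewrite Hsym.
      exact: Hbc.
    rewrite !inE => /orP[/eqP ->|/eqP ->]; lia.
  exists o, o2; split => //.
    apply/(sol_iff blue Ho2) => v.
    have := Hrev v; have := Htot v; have := le2 v; lia.
  move/card_gt0P: Hn => [v _].
  have : 0 < #|[set w | adj v w]| by rewrite Hcub.
  move/card_gt0P => [w]; rewrite inE => Hvw.
  exists v, w; rewrite /o2; exact: Ho.2 _ _ Hvw.
Qed.
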